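(* Let $q\ge2$, $\mathcal{S}$ an SLP deriving $T$ with $|T|\ge q$, and $\phi$ a fingerprint function that is collision free on the substrings of length $q-1$ of $T$ (i.e. for any two length-$(q-1)$ substrings $u,v$ of $T$, $\phi(u)=\phi(v)$ iff $u=v$). Let $G$ be the graph constructed from $\mathcal{S}$ by inserting relevant substrings, and let $C$ be the CS-tree built from $G$, both as described in the context. Then $C$ contains each distinct q-gram of $T$ exactly once, i.e., for each distinct q-gram $s$ of $T$ there is exactly one downward path of $q$ edges in $C$ whose edge labels, read from top to bottom, spell $s$.
   Context: Strings are 0-indexed; $s[i:j]$ is the substring from position $i$ to $j$ inclusive. An SLP is a set of rules $X_1,\dots,X_n$, each $X_i=a$ or $X_i=X_lX_r$ ($l,r<i$); $t_{X_i}$ is the derived string, $|X_i|=|t_{X_i}|$, $T=t_{X_n}$; $occ(X_i)$ is the number of occurrences of $X_i$ in the derivation tree. For $X_i=X_lX_r$ with $|X_i|\ge q$, $r_{X_i}=t_{X_i}[\max(0,|X_l|-q+1):\min(|X_l|+q-2,|X_i|-1)]$. Construction of $G$: start with an empty directed graph whose nodes are keyed by fingerprints. For each rule $X_i=X_lX_r$ with $|X_i|\ge q$ (any order), with $r=r_{X_i}$: create node $\phi(r[0:q-2])$ if absent; for $j=1,\dots,|r|-q+1$, create node $\phi(r[j:j+q-2])$ if absent, create an edge labelled $r[j+q-2]$ with counter $0$ from node $\phi(r[j-1:j+q-3])$ to node $\phi(r[j:j+q-2])$ if no edge in that direction between them exists, and add $occ(X_i)$ to its counter. The start node is the node labelled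 $\phi(T[0:q-2])$. Construction of the CS-tree $C$ (a rooted tree with characters on edges): create a path of $q-1$ edges from a root $u_0$ down to $u_{q-1}$, the edge $u_{j-1}\to u_j$ labelled $T[j-1]$; $u_{q-1}$ corresponds to the start node of $G$ and gets its label. Do a depth-first traversal of $G$ from the start node along directed edges; when exploring an edge of $G$ from node $x$ (with tree node $\tau(x)$) to node $y$ having label $c$ and counter $m$: if $y$ is unvisited, create a tree node $\tau(y)$ as a child of $\tau(x)$ via an edge labelled $c$ with counter $m$, give $\tau(y)$ the fingerprint label of $y$, and continue the traversal from $y$; if $y$ was already visited, create a new leaf child of $\tau(x)$ via an edge labelled $c$ with counter $m$, labelled with the fingerprint label of $y$. *)

(* Defs.v *)
From mathcomp Require Import all_boot.
Set Implicit Arguments. Unset Strict Implicit. Unset Printing Implicit Defensive.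

Section CSTree.
Variables (A F : eqType).

(* s[i:j] (0-indexed, inclusive) *)
Definition substr (s : seq A) (i j : nat) : seq A := take (j - i).+1 (drop i s).

Definition is_qgram (q : nat) (T s : seq A) : Prop :=
  exists i, i + q <= size T /\ s = take q (drop i T).

(* Rule X_i (index i in the list) is either X_i = a or X_i = X_l X_r. *)
Inductive rule := Term of A | Pair of nat & nat.
Definition slp := seq rule.

Fixpoint derivs_aux (acc : seq (seq A)) (rs : seq rule) : seq (seq A) :=
  match rs with
  | [::] => acc
  | r :: rs' =>
      derivs_aux (rcons acc (match r with
                             | Term a => [:: a]
                             | Pair l r => nth [::] acc l ++ nth [::] acc r
                             end)) rs'
  end.

Definition tstr (S : slp) (i : nat) : seq A := nth [::] (derivs_aux [::] S) i.
Definition slp_text (S : slp) : seq A := tstr S (size S).-1.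

Definition slp_wf (S : slp) : Prop :=
  0 < size S /\
  forall i l r, onth S i = Some (Pair l r) -> l < i /\ r < i.

(* occ(X_i): number of occurrences of X_i in the derivation tree of T.
   Counts are propagated top-down (the root X_n occurs once). *)
Definition occ_step (S : slp) (cnt : seq nat) (j : nat) : seq nat :=
  match onth S j with
  | Some (Pair l r) =>
      let m := nth 0 cnt j in
      let c1 := set_nth 0 cnt l (nth 0 cnt l + m) in
      set_nth 0 c1 r (nth 0 c1 r + m)
  | _ => cnt
  end.

Definition occs (S : slp) : seq nat :=
  foldl (occ_step S) (set_nth 0 (nseq (size S) 0) (size S).-1 1)
        (rev (iota 0 (size S))).

Definition occ (S : slp) (i : nat) : nat := nth 0 (occs S) i.

(* r_{X_i} = t_{X_i}[max(0,|X_l|-q+1) : min(|X_l|+q-2, |X_i|-1)] *)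
Definition rel_sub (q : nat) (S : slp) (i : nat) : seq A :=
  match onth S i with
  | Some (Pair l r) =>
      let s := tstr S i in
      let L := size (tstr S l) in
      substr s (L.+1 - q) (minn (L + q - 2) (size s).-1)
  | _ => [::]
  end.

Record edge := Edge { esrc : F; elab : A; edst : F; ecnt : nat }.
Record graph := Graph { gnodes : seq F; gedges : seq edge }.

Definition add_node (g : graph) (x : F) : graph :=
  if x \in gnodes g then g else Graph (rcons (gnodes g) x) (gedges g).

Definition add_edge (g : graph) (x : F) (c : A) (y : F) (m : nat) : graph :=
  if has (fun e => (esrc e == x) && (edst e == y)) (gedges g) then
    Graph (gnodes g)
      [seq if (esrc e == x) && (edst e == y)
           then Edge (esrc e) (elab e) (edst e) (ecnt e + m) else e
      | e <- gedges g]
  else Graph (gnodes g) (rcons (gedges g) (Edge x c y (0 + m))).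

Definition insert_step (phi : seq A -> F) (q m : nat) (r : seq A)
    (g : graph) (j : nat) : graph :=
  let g1 := add_node g (phi (substr r j (j + q - 2))) in
  match onth r (j + q - 2) with
  | Some c => add_edge g1 (phi (substr r j.-1 (j + q - 3)))
                          c (phi (substr r j (j + q - 2))) m
  | None => g1
  end.

Definition insert_rule (phi : seq A -> F) (q : nat) (S : slp)
    (g : graph) (i : nat) : graph :=
  match onth S i with
  | Some (Pair _ _) =>
      if q <= size (tstr S i) then
        let r := rel_sub q S i in
        let g0 := add_node g (phi (take (q - 1) r)) in
        foldl (insert_step phi q (occ S i) r) g0 (iota 1 (size r - q + 1))
      else g
  | _ => g
  end.

(* rules processed in the order given by [ord] (any permutation of the rules) *)
Definition build_graph (phi : seq A -> F) (q : nat) (S : slp) (ord : seq nat)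
  : graph := foldl (insert_rule phi q S) (Graph [::] [::]) ord.

Definition out_edges (G : graph) (x : F) : seq (A * F * nat) :=
  [seq (elab e, edst e, ecnt e) | e <- gedges G & esrc e == x].

(* Tree node 0 is the root; the k-th entry (0-based) of the list describes
   tree node k+1: its parent, the label and counter of the edge from the
   parent, and its fingerprint label (if any). *)
Record tentry := TEntry { tpar : nat; tlab : A; tcnt : option nat; tfp : option F }.
Definition ctree := seq tentry.

(* path u_0 -> ... -> u_{q-1} spelling T[0:q-2]; u_{q-1} gets label st *)
Definition init_tree (q : nat) (T : seq A) (st : F) : ctree :=
  [seq TEntry p.1 p.2 None (if p.1.+1 == q.-1 then Some st else None)
  | p <- zip (iota 0 (q - 1)) (take (q - 1) T)].

(* Depth-first traversal: [ordr x] is the order in which the outgoing edges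
   of x are explored; [tx] is the tree node tau(x); the state is the tree
   built so far together with the list of visited graph nodes. *)
Fixpoint explore (ordr : F -> seq (A * F * nat)) (fuel : nat) (x : F)
    (tx : nat) (st : ctree * seq F) {struct fuel} : ctree * seq F :=
  match fuel with
  | 0 => st
  | fuel'.+1 =>
      foldl (fun st e =>
               let: (c, y, m) := e in
               let: (tr, vis) := st in
               if y \in vis then (rcons tr (TEntry tx c (Some m) (Some y)), vis)
               else explore ordr fuel' y (size tr).+1
                      (rcons tr (TEntry tx c (Some m) (Some y)), rcons vis y))
            st (ordr x)
  end.

(* fuel |nodes G| + 1 exceeds the recursion depth of the traversal *)
Definition cs_tree (phi : seq A -> F) (q : nat) (T : seq A) (G : graph)
    (ordr : F -> seq (A * F * nat)) : ctree :=
  let st := phi (take (q - 1) T) in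
  (explore ordr (size (gnodes G)).+1 st (q - 1) (init_tree q T st, [:: st])).1.

Definition tchild (C : ctree) (u v : nat) : bool :=
  if onth C v.-1 is Some e then (0 < v) && (tpar e == u) else false.

Definition tspell (C : ctree) (vs : seq nat) : seq A :=
  pmap (fun v => omap tlab (onth C v.-1)) vs.

(* (v0, vs): downward path v0 -> vs_1 -> ... -> vs_k of k = size vs edges *)
Definition down_path (C : ctree) (v0 : nat) (vs : seq nat) : Prop :=
  v0 <= size C /\ path (tchild C) v0 vs.

End CSTree.

(* Main.v *)
From HB Require Import structures.
Require Import Defs.
From mathcomp Require Import all_boot.
From mathcomp Require Import zify.
Set Implicit Arguments. Unset Strict Implicit. Unset Printing Implicit Defensive.

Section EqInst.
Variables A F : eqType.
Definition e2t (e : edge A F) := (esrc e, elab e, edst e, ecnt e).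
Definition t2e (t : F * A * F * nat) := let: (a, b, c, d) := t in Edge a b c d.
Lemma e2tK : cancel e2t t2e. Proof. by case. Qed.
HB.instance Definition _ := Equality.copy (edge A F) (can_type e2tK).
Definition te2t (e : tentry A F) := (tpar e, tlab e, tcnt e, tfp e).
Definition t2te (t : nat * A * option nat * option F) := let: (a, b, c, d) := t in TEntry a b c d.
Lemma te2tK : cancel te2t t2te. Proof. by case. Qed.
HB.instance Definition _ := Equality.copy (tentry A F) (can_type te2tK).
End EqInst.

Section SeqAux.
Variable T : eqType.
Implicit Types s u w : seq T.

Definition isub s w := exists u v, w = u ++ s ++ v.

Lemma isub_trans a b c : isub a b -> isub b c -> isub a c.
Proof. move=> [u1 [v1 ->]] [u2 [v2 ->]]. exists (u2 ++ u1), (v1 ++ v2). by rewrite -!catA. Qed.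

Lemma isub_take n s : isub (take n s) s.
Proof. exists [::], (drop n s). by rewrite /= cat_take_drop. Qed.

Lemma isub_drop n s : isub (drop n s) s.
Proof. exists (take n s), [::]. by rewrite cats0 cat_take_drop. Qed.

Lemma isub_refl s : isub s s.
Proof. exists [::], [::]. by rewrite cats0. Qed.

Lemma qgramP n w s : is_qgram n w s <-> size s = n /\ isub s w.
Proof.
split.
- move=> [i [Hi ->]]. split; first by rewrite size_takel // size_drop; lia.
  exact: isub_trans (isub_take _ _) (isub_drop _ _).
- move=> [Hs [u [v ->]]]. exists (size u). split; first by rewrite !size_cat; lia.
  by rewrite drop_size_cat // take_size_cat.
Qed.

Lemma nth_win x0 s o n i : i < n -> nth x0 (take n (drop o s)) i = nth x0 s (o + i).
Proof. move=> Hi. by rewrite nth_take // nth_drop. Qed.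

Lemma size_win s o n : o + n <= size s -> size (take n (drop o s)) = n.
Proof. move=> H. rewrite size_takel // size_drop. lia. Qed.

Lemma uniq_map_inj (U : eqType) (f : T -> U) s x y :
  uniq (map f s) -> x \in s -> y \in s -> f x = f y -> x = y.
Proof.
elim: s => //= a s IH /andP [Hn Hu]. rewrite !inE.
case/orP=> [/eqP ->|Hx]; case/orP=> [/eqP ->|Hy] //.
- move=> E. by move: Hn; rewrite E map_f.
- move=> E. by move: Hn; rewrite -E map_f.
- exact: IH.
Qed.

End SeqAux.

Section Slp.
Variable A : eqType.
Implicit Type S : slp A.

Definition body (r : rule A) (acc : seq (seq A)) :=
  match r with Term a => [:: a] | Pair l r => nth [::] acc l ++ nth [::] acc r end.

Lemma derivs_cons acc r rs :
  derivs_aux acc (r :: rs) = derivs_aux (rcons acc (body r acc)) rs.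
Proof. by []. Qed.

Lemma derivs_prefix (rs : seq (rule A)) acc : exists ext, derivs_aux acc rs = acc ++ ext /\ size ext = size rs.
Proof.
elim: rs acc => [|r rs IH] acc; first by exists [::]; rewrite cats0.
rewrite derivs_cons. have [ext [-> Hs]] := IH (rcons acc (body r acc)).
exists (body r acc :: ext). rewrite -cats1 -catA. by split; last rewrite /= Hs.
Qed.

Lemma derivs_nth (rs : seq (rule A)) acc k r : onth rs k = Some r ->
  nth [::] (derivs_aux acc rs) (size acc + k) =
  body r (take (size acc + k) (derivs_aux acc rs)).
Proof.
elim: rs acc k => [|r0 rs IH] acc k; first by rewrite onth0n.
case: k => [|k] /=.
- case=> <-. have [ext [-> _]] := derivs_prefix rs (rcons acc (body r0 acc)).
  rewrite addn0 -cats1 -catA nth_cat ltnn subnn /= take_size_cat //.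
- move=> H. have := IH (rcons acc (body r0 acc)) k H. rewrite size_rcons addSn addnS.
  by [].  
Qed.

Lemma size_derivs S : size (derivs_aux [::] S) = size S.
Proof. by have [ext [-> ->]] := derivs_prefix S [::]. Qed.

Lemma tstr_pair S i l r : slp_wf S -> onth S i = Some (Pair A l r) ->
  tstr S i = tstr S l ++ tstr S r.
Proof.
move=> [_ Hwf] H. have [Hl Hr] := Hwf _ _ _ H.
have := derivs_nth [::] H. rewrite /= => E. rewrite /tstr E /=.
by rewrite !nth_take.
Qed.

Lemma tstr_term S i a : onth S i = Some (Term a) -> tstr S i = [:: a].
Proof. move=> H. have := derivs_nth [::] H. by rewrite /tstr /= => ->. Qed.

Definition Pcnt S (cnt : seq nat) :=
  forall i, 0 < nth 0 cnt i -> isub (tstr S i) (slp_text S).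

Lemma Pcnt_set S cnt x m : Pcnt S cnt -> (0 < m -> isub (tstr S x) (slp_text S)) ->
  Pcnt S (set_nth 0 cnt x (nth 0 cnt x + m)).
Proof.
move=> HP Hm i. rewrite nth_set_nth /=. case: eqP => [->|_]; last exact: HP.
case: (posnP m) => [->|Hm0]; rewrite ?addn0; first exact: HP.
by move=> _; apply: Hm.
Qed.

Lemma occ_sub S i : slp_wf S -> 0 < occ S i -> isub (tstr S i) (slp_text S).
Proof.
move=> Hwf. rewrite /occ /occs.
have: Pcnt S (set_nth 0 (nseq (size S) 0) (size S).-1 1).
  move=> j. rewrite nth_set_nth /=. case: eqP => [->|_]; first by rewrite /slp_text; move=> _; apply: isub_refl.
  by rewrite nth_nseq; case: ifP.
elim: (rev (iota 0 (size S))) (set_nth _ _ _ _) => [|j js IH] cnt HP /=; first exact: HP.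
apply: IH. rewrite /occ_step. case Hj: (onth S j) => [[a|l r]|] //.
have Hsub : 0 < nth 0 cnt j -> forall x, isub (tstr S x) (tstr S j) -> isub (tstr S x) (slp_text S).
  by move=> Hp x Hx; apply: isub_trans Hx (HP _ Hp).
rewrite (tstr_pair Hwf Hj) in Hsub.
apply: Pcnt_set; first apply: Pcnt_set => //.
- move=> Hp. apply: Hsub => //. by exists [::], (tstr S r).
- move=> Hp. apply: Hsub => //. exists (tstr S l), [::]. by rewrite cats0.
Qed.

End Slp.
Section Win.
Variable A : eqType.
Implicit Type S : slp A.
Variable q : nat.
Hypothesis q2 : 2 <= q.

Lemma relsub_win S i l r p : onth S i = Some (Pair A l r) ->
  p < size (tstr S l) < p + q -> p + q <= size (tstr S i) ->
  exists o, o + q <= size (rel_sub q S i) /\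
            take q (drop o (rel_sub q S i)) = take q (drop p (tstr S i)).
Proof.
move=> H /andP [H1 H2] H3. rewrite /rel_sub H /substr.
have [x0 _] : exists x0 : A, True.
  move: H3; case: (tstr S i) => [|x ?] /=; [lia|by exists x].
move: (tstr S i) (size (tstr S l)) H1 H2 H3 => s L H1 H2 H3.
have Hap : L.+1 - q <= p by lia.
have Hpe : p + q - 1 <= minn (L + q - 2) (size s).-1 by lia.
exists (p - (L.+1 - q)).
have Hsz : p - (L.+1 - q) + q <= size (take (minn (L + q - 2) (size s).-1 - (L.+1 - q)).+1 (drop (L.+1 - q) s)).
  rewrite size_take_min size_drop. lia.
split => //.
apply: (@eq_from_nth _ x0); first by rewrite !size_win //; lia.
move=> k. rewrite size_win // => Hk. rewrite !nth_win //.
by congr nth; lia. lia.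
Qed.

Lemma win_in_rule S : slp_wf S -> forall i, i < size S ->
  forall p, p + q <= size (tstr S i) ->
  exists i' o, [/\ i' < size S, (exists l r, onth S i' = Some (Pair A l r)),
     q <= size (tstr S i'), o + q <= size (rel_sub q S i') &
     take q (drop o (rel_sub q S i')) = take q (drop p (tstr S i))].
Proof.
move=> Hwf. elim/ltn_ind=> i IH Hi p Hp.
case Hr: (onth S i) => [r0|]; last by move: (onthNE S i); rewrite Hr leqNgt Hi.
case: r0 Hr => [a|l r] Hr; first by move: Hp; rewrite (tstr_term Hr) /=; lia.
have [Hl Hr'] := Hwf.2 _ _ _ Hr.
have Ht := tstr_pair Hwf Hr.
case: (leqP (p + q) (size (tstr S l))) => Hc1.
  have [i' [o [? ? ? ? E]]] := IH l Hl (ltn_trans Hl Hi) p Hc1.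
  exists i', o; split => //. rewrite E Ht drop_cat ifT; last lia.
  by rewrite takel_cat // size_drop; lia.
case: (leqP (size (tstr S l)) p) => Hc2.
  have Hp' : p - size (tstr S l) + q <= size (tstr S r) by move: Hp; rewrite Ht size_cat; lia.
  have [i' [o [? ? ? ? E]]] := IH r Hr' (ltn_trans Hr' Hi) _ Hp'.
  exists i', o; split => //. by rewrite E Ht drop_cat ifF //; apply/negbTE; rewrite -leqNgt.
have [o [Ho E]] := @relsub_win S i l r p Hr (introT andP (conj Hc2 Hc1)) Hp.
exists i, o; split => //; [by exists l, r| lia].
Qed.
End Win.
Section Graph.
Variables A F : eqType.
Variable q : nat.
Hypothesis q2 : 2 <= q.
Variable phi : seq A -> F.
Variable T : seq A.
Implicit Types (g : graph A F) (x y : F) (m j : nat) (c : A) (r : seq A).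

Definition hasE (g : graph A F) x y := has (fun e => (esrc e == x) && (edst e == y)) (gedges g).
Definition pairE (e : edge A F) := (esrc e, edst e).
Definition edge_ok (g : graph A F) (e : edge A F) :=
  edst e \in gnodes g /\ exists k, [/\ size k = q - 1, isub (rcons k (elab e)) T,
     esrc e = phi k & edst e = phi (behead (rcons k (elab e)))].
Definition GI (g : graph A F) :=
  (forall e : edge A F, e \in gedges g -> edge_ok g e) /\ uniq (map pairE (gedges g)).

Lemma gedges_add_node g x : gedges (add_node g x) = gedges g.
Proof. by rewrite /add_node; case: ifP. Qed.

Lemma gnodes_add_node g x : x \in gnodes (add_node g x) /\ {subset gnodes g <= gnodes (add_node g x)}.
Proof.
rewrite /add_node; case: ifP => H /=; first by split.
split; first by rewrite mem_rcons mem_head.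
by move=> z Hz; rewrite mem_rcons in_cons Hz orbT.
Qed.

Lemma gnodes_add_edge g x c y m : gnodes (add_edge g x c y m) = gnodes g.
Proof. by rewrite /add_edge; case: ifP. Qed.

Lemma edge_ok_mono g g' e : {subset gnodes g <= gnodes g'} -> edge_ok g e -> edge_ok g' e.
Proof. move=> Hs [H1 H2]; split => //; exact: Hs. Qed.

Lemma hasE_add_node g x (x' y' : F) : hasE g x' y' -> hasE (add_node g x) x' y'.
Proof. by rewrite /hasE gedges_add_node. Qed.

Lemma hasE_add_edge g x c y m (x' y' : F) :
  hasE g x' y' || ((x' == x) && (y' == y)) -> hasE (add_edge g x c y m) x' y'.
Proof.
rewrite /add_edge /hasE. case: ifP => Hh /=.
- have key : forall e, e \in gedges g -> esrc e = x' -> edst e = y' ->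
    has (fun e => (esrc e == x') && (edst e == y'))
      [seq (if (esrc e0 == x) && (edst e0 == y)
            then Edge (esrc e0) (elab e0) (edst e0) (ecnt e0 + m) else e0) | e0 <- gedges g].
    move=> e He E1 E2. apply/hasP. eexists; first exact: map_f He.
    by case: ((esrc e == x) && (edst e == y)) => /=; rewrite E1 E2 !eqxx.
  case/orP => [/hasP [e He /andP [/eqP E1 /eqP E2]] | /andP [/eqP Ex /eqP Ey]].
  + exact: key He E1 E2.
  + move/hasP: Hh => [e He /andP [/eqP E1 /eqP E2]]. apply: key He _ _; by rewrite ?Ex ?Ey.
- rewrite has_rcons /=. case/orP => [H|/andP [/eqP -> /eqP ->]]; by rewrite ?H ?eqxx ?orbT.
Qed.

Lemma GI_add_node g x : GI g -> GI (add_node g x).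
Proof.
move=> [H1 H2]. rewrite /GI gedges_add_node. split => // e He.
apply: edge_ok_mono (H1 _ He). exact: (gnodes_add_node g x).2.
Qed.

Lemma GI_add_edge g x c y m : GI g -> y \in gnodes g ->
  (exists k, [/\ size k = q - 1, isub (rcons k c) T, x = phi k & y = phi (behead (rcons k c))]) ->
  GI (add_edge g x c y m).
Proof.
move=> [H1 H2] Hy Hk. rewrite /GI /add_edge. case: ifP => Hh /=.
- split.
  + move=> e /mapP [e0 He0 ->]. have [Ha Hb] := H1 _ He0.
    by case: ifP => _ //; split.
  + rewrite -map_comp. rewrite (@eq_map _ _ _ pairE) //. by move=> e0 /=; case: ifP.
- split.
  + move=> e. rewrite mem_rcons in_cons. case/orP => [/eqP ->|He]; last exact: H1.
    split => //=.
  + rewrite map_rcons rcons_uniq H2 andbT. apply/mapP => [[e0 He0 E]].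
    move/negbT: Hh => /hasPn /(_ _ He0). by case: E => -> ->; rewrite !eqxx.
Qed.

Lemma substr_win (r : seq A) a b : a <= b -> substr r a b = take (b - a).+1 (drop a r).
Proof. by []. Qed.

Lemma behead_drop (r : seq A) o : behead (drop o r) = drop o.+1 r.
Proof. elim: r o => [|x r IH] [|o] /=; by rewrite ?drop0. Qed.

Lemma behead_take (r : seq A) n : behead (take n.+1 r) = take n (behead r).
Proof. by case: r. Qed.

Lemma step_strings (r : seq A) j c : 0 < j -> onth r (j + q - 2) = Some c ->
  substr r j.-1 (j + q - 3) = take (q - 1) (drop j.-1 r) /\
  substr r j (j + q - 2) = take (q - 1) (drop j r) /\
  rcons (take (q - 1) (drop j.-1 r)) c = take q (drop j.-1 r) /\
  behead (take q (drop j.-1 r)) = take (q - 1) (drop j r).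
Proof.
move=> Hj Hc. have Hlt : j + q - 2 < size r by move: (onthNE r (j + q - 2)); rewrite Hc; case: leqP.
split; first by rewrite /substr; congr take; lia.
split; first by rewrite /substr; congr take; lia.
split.
- have -> : take q (drop j.-1 r) = take (q - 1).+1 (drop j.-1 r) by congr take; lia.
  rewrite (take_nth c); last by rewrite size_drop; lia.
  rewrite nth_drop. have -> : j.-1 + (q - 1) = j + q - 2 by lia.
  by rewrite (onth_nth c c _ _ Hc).
- have -> : take q (drop j.-1 r) = take (q - 1).+1 (drop j.-1 r) by congr take; lia.
  rewrite behead_take behead_drop. by have -> : j.-1.+1 = j by lia.
Qed.

Lemma GI_insert_step g m r j : GI g -> isub r T -> 0 < j -> GI (insert_step phi q m r g j).
Proof.
move=> Hg Hr Hj. rewrite /insert_step.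
have Hg1 := GI_add_node (phi (substr r j (j + q - 2))) Hg.
case Hc: (onth r (j + q - 2)) => [c|] //.
have [E1 [E2 [E3 E4]]] := step_strings Hj Hc.
apply: GI_add_edge => //; first exact: (gnodes_add_node _ _).1.
exists (take (q - 1) (drop j.-1 r)). rewrite E3 E4 E1 E2. split => //.
- rewrite size_takel // size_drop. move: (onthNE r (j + q - 2)); rewrite Hc; case: leqP => //; lia.
- apply: isub_trans Hr. exact: isub_trans (isub_take _ _) (isub_drop _ _).
Qed.

Lemma hasE_insert_step g m r j x y : hasE g x y -> hasE (insert_step phi q m r g j) x y.
Proof.
move=> H. rewrite /insert_step. case: (onth r _) => [c|]; last exact: hasE_add_node.
apply: hasE_add_edge. by rewrite hasE_add_node.
Qed.

Lemma hasE_insert_step_new g m r j c : 0 < j -> onth r (j + q - 2) = Some c ->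
  hasE (insert_step phi q m r g j) (phi (take (q - 1) (drop j.-1 r))) (phi (take (q - 1) (drop j r))).
Proof.
move=> Hj Hc. have [E1 [E2 _]] := step_strings Hj Hc.
rewrite /insert_step Hc. apply: hasE_add_edge. by rewrite E1 E2 !eqxx orbT.
Qed.

End Graph.

Lemma foldl_inv (G : Type) (X : eqType) (P : G -> Prop) (f : G -> X -> G) (xs : seq X) g0 :
  (forall g x, x \in xs -> P g -> P (f g x)) -> P g0 -> P (foldl f g0 xs).
Proof.
elim: xs g0 => //= a xs IH g0 H Hg. apply: IH.
- move=> g x Hx; apply: H; by rewrite in_cons Hx orbT.
- apply: H => //; exact: mem_head.
Qed.

Lemma foldl_hit (G : Type) (X : eqType) (P : G -> Prop) (f : G -> X -> G) (xs : seq X) g0 x0 :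
  (forall g x, P g -> P (f g x)) -> (forall g, P (f g x0)) -> x0 \in xs -> P (foldl f g0 xs).
Proof.
move=> Hm Hh. elim: xs g0 => //= a xs IH g0. rewrite in_cons; case/orP => [/eqP <-|Hx].
- apply: foldl_inv; [move=> g x _; exact: Hm | exact: Hh].
- exact: IH.
Qed.
Section Build.
Variables A F : eqType.
Variable q : nat.
Hypothesis q2 : 2 <= q.
Variable phi : seq A -> F.
Variable S : slp A.
Hypothesis Hwf : slp_wf S.
Hypothesis Hocc : forall i, i < size S -> 0 < occ S i.
Variable ord : seq nat.
Hypothesis Hperm : perm_eq ord (iota 0 (size S)).
Local Notation T := (slp_text S).

Lemma onth_size (X : Type) (s : seq X) i x : onth s i = Some x -> i < size s.
Proof. move=> H. move: (onthNE s i). rewrite H. by case: leqP. Qed.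

Lemma GI_insert_rule g i : GI q phi T g -> GI q phi T (insert_rule phi q S g i).
Proof.
move=> Hg. rewrite /insert_rule. case Hi: (onth S i) => [[a|l r]|] //. case: ifP => // Hq.
apply: foldl_inv; last exact: GI_add_node.
move=> g' j Hj Hg'. apply: GI_insert_step => //.
- have Hsub : isub (tstr S i) T by apply: occ_sub => //; apply: Hocc; exact: onth_size Hi.
  apply: isub_trans Hsub. rewrite /rel_sub Hi /substr.
  exact: isub_trans (isub_take _ _) (isub_drop _ _).
- by move: Hj; rewrite mem_iota; case/andP.
Qed.

Lemma GI_build : GI q phi T (build_graph phi q S ord).
Proof.
apply: foldl_inv; first by move=> g i _; apply: GI_insert_rule.
by split.
Qed.

Lemma hasE_insert_rule g i x y : hasE g x y -> hasE (insert_rule phi q S g i) x y.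
Proof.
move=> H. rewrite /insert_rule. case: (onth S i) => [[a|l r]|] //. case: ifP => // _.
apply: (foldl_inv (P := fun g => hasE g x y)); last exact: hasE_add_node.
move=> g' j _; exact: hasE_insert_step.
Qed.

Lemma hasE_build s : is_qgram q T s ->
  hasE (build_graph phi q S ord) (phi (take (q - 1) s)) (phi (behead s)).
Proof.
move=> [p [Hp ->]].
have HT : T = tstr S (size S).-1 by [].
have Hn : (size S).-1 < size S by case: Hwf => H0 _; lia.
have Hp' : p + q <= size (tstr S (size S).-1) by rewrite -HT.
have [i' [o [Hi' [l [r Hr]] Hq Ho E]]] := win_in_rule q2 Hwf Hn Hp'.
rewrite HT -E.
apply: (@foldl_hit _ _ (fun g => hasE g (phi (take (q - 1) (take q (drop o (rel_sub q S i'))))) (phi (behead (take q (drop o (rel_sub q S i')))))) _ _ _ i').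
- move=> g i; exact: hasE_insert_rule.
- move=> g. rewrite /insert_rule Hr ifT //.
  apply: (@foldl_hit _ _ (fun g => hasE g (phi (take (q - 1) (take q (drop o (rel_sub q S i'))))) (phi (behead (take q (drop o (rel_sub q S i')))))) _ _ _ o.+1).
  + move=> g' j; exact: hasE_insert_step.
  + move=> g'. case Ec: (onth (rel_sub q S i') (o.+1 + q - 2)) => [c|]; last first.
      by move: (onthNE (rel_sub q S i') (o.+1 + q - 2)); rewrite Ec /=; lia.
    have := @hasE_insert_step_new _ _ _ q2 phi g' (occ S i') _ o.+1 c isT Ec.
    rewrite /= take_takel; last lia.
    have -> : take q (drop o (rel_sub q S i')) = take (q - 1).+1 (drop o (rel_sub q S i')) by congr take; lia.
    by rewrite behead_take behead_drop.
  + rewrite mem_iota. lia.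
- by rewrite (perm_mem Hperm) mem_iota.
Qed.

End Build.
Section DFS.
Variables A F : eqType.
Variable E : F -> seq (A * F * nat).
Variable V : seq F.
Hypothesis EV : forall x c y m, (c, y, m) \in E x -> y \in V.
Variable b : nat.
Implicit Types (tr : ctree A F) (vis : seq F) (exp : seq (F * nat)).

Definition hE (e : tentry A F) := (tlab e, tcnt e, tfp e).
Definition fE (t : A * F * nat) := (t.1.1, Some t.2, Some t.1.2).
Definition children tr p := [seq hE e | e <- tr & tpar e == p].

Record Inv tr vis exp : Prop := MkInv {
  inv1 : map fst exp = vis;
  inv2 : uniq vis;
  inv3 : {subset vis <= V};
  inv4 : b <= size tr;
  inv5 : forall y v, (y, v) \in exp -> 0 < v /\ exists e, onth tr v.-1 = Some e /\ tfp e = Some y;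
  inv6 : forall k e, onth tr k = Some e -> tpar e <= k;
  inv7 : forall k e, onth tr k = Some e -> b <= k -> exists x y m,
      [/\ (x, tpar e) \in exp, (tlab e, y, m) \in E x, tcnt e = Some m, tfp e = Some y & y \in vis] }.

Definition dstep fuel' tx (st : ctree A F * seq F) (e : A * F * nat) :=
  let: (c, y, m) := e in let: (tr, vis) := st in
  if y \in vis then (rcons tr (TEntry tx c (Some m) (Some y)), vis)
  else explore E fuel' y (size tr).+1 (rcons tr (TEntry tx c (Some m) (Some y)), rcons vis y).

Lemma explore_S fuel' x tx st : explore E fuel'.+1 x tx st = foldl (dstep fuel' tx) st (E x).
Proof. by []. Qed.

Lemma onth_rcons (X : Type) (s : seq X) z k :
  onth (rcons s z) k = if k < size s then onth s k else if k == size s then Some z else None.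
Proof.
rewrite -cats1 onth_cat. case: ltnP => // H. case: eqP => [->|Hne]; first by rewrite subnn.
have : 0 < k - size s by lia. case: (k - size s) => [|n] //= _. by rewrite onth0n.
Qed.

Lemma onth_catl (X : Type) (s t : seq X) k z : onth s k = Some z -> onth (s ++ t) k = Some z.
Proof. move=> H. by rewrite onth_cat (onth_size H). Qed.

Lemma children_rcons tr e p :
  children (rcons tr e) p = if tpar e == p then rcons (children tr p) (hE e) else children tr p.
Proof. rewrite /children filter_rcons. by case: ifP => _; rewrite ?map_rcons. Qed.

Lemma children_nil tr p : (forall k e, onth tr k = Some e -> tpar e <= k) -> size tr <= p ->
  children tr p = [::].
Proof.
move=> H Hp. apply/eqP. rewrite -size_eq0 size_map size_filter -leqn0 leqNgt -has_count.
apply/hasPn => e /onthP [k Hk]. have := H _ _ Hk. have := onth_size Hk.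
move=> H1 H2; apply/negP => /eqP E0. by move: (leq_ltn_trans H2 H1); rewrite E0 ltnNge Hp.
Qed.

Lemma Inv_tx tr vis exp x tx : Inv tr vis exp -> (x, tx) \in exp -> 0 < tx <= size tr.
Proof.
move=> [_ _ _ _ H2 _ _] Hx. have [H0 [e [He _]]] := H2 _ _ Hx.
have := onth_size He. lia.
Qed.

Lemma Inv_leaf tr vis exp x tx c y m : Inv tr vis exp -> (x, tx) \in exp -> (c, y, m) \in E x ->
  y \in vis -> Inv (rcons tr (TEntry tx c (Some m) (Some y))) vis exp.
Proof.
move=> HI Hx He Hy. have Htx := Inv_tx HI Hx.
case: HI => H1 H2 H3 H4 H5 H6 H7. split => //.
- by rewrite size_rcons; lia.
- move=> y' v Hv. have [Hv0 [e [Ee Hfe]]] := H5 _ _ Hv. split => //. exists e. by rewrite -cats1 (onth_catl _ Ee).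
- move=> k e. rewrite onth_rcons. case: ltnP => Hk; first exact: H6.
  case: eqP => // -> [<-] /=. lia.
- move=> k e. rewrite onth_rcons. case: ltnP => Hk; first exact: H7.
  case: eqP => // -> [<-] /= _. by exists x, y, m.
Qed.

Lemma Inv_new tr vis exp x tx c y m : Inv tr vis exp -> (x, tx) \in exp -> (c, y, m) \in E x ->
  y \notin vis ->
  Inv (rcons tr (TEntry tx c (Some m) (Some y))) (rcons vis y) (rcons exp (y, (size tr).+1)).
Proof.
move=> HI Hx He Hy. have Htx := Inv_tx HI Hx.
case: HI => H1 H2 H3 H4 H5 H6 H7. split.
- by rewrite map_rcons H1.
- by rewrite rcons_uniq Hy.
- move=> z. rewrite mem_rcons in_cons. case/orP => [/eqP ->|]; [exact: EV He| exact: H3].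
- by rewrite size_rcons; lia.
- move=> y' v. rewrite mem_rcons in_cons. case/orP => [/eqP [-> ->]|Hv].
    split => //. exists (TEntry tx c (Some m) (Some y)). by rewrite /= onth_rcons ltnn eqxx.
  have [Hv0 [e [Ee Hfe]]] := H5 _ _ Hv. split => //. exists e. by rewrite -cats1 (onth_catl _ Ee).
- move=> k e. rewrite onth_rcons. case: ltnP => Hk; first exact: H6.
  case: eqP => // -> [<-] /=. lia.
- move=> k e. rewrite onth_rcons. case: ltnP => Hk.
    move=> Hke Hb. have [x' [y' [m' [Hxa Hea Hc Hfp Hy']]]] := H7 _ _ Hke Hb.
    exists x', y', m'; split => //; by rewrite mem_rcons in_cons ?Hxa ?Hy' orbT.
  case: eqP => // -> [<-] /= _. exists x, y, m; split => //; by rewrite mem_rcons ?mem_head ?in_cons ?Hx ?orbT.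
Qed.

Definition Post tr tx (ch : seq (A * option nat * option F)) exp (res : ctree A F * seq F) :=
 exists exp', [/\ Inv res.1 res.2 (exp ++ exp'), exists t, res.1 = tr ++ t,
    children res.1 tx = ch,
    (forall y v, (y, v) \in exp' -> children res.1 v = map fE (E y) /\ size tr < v) &
    (forall v, v != tx -> v <= size tr -> children res.1 v = children tr v)].

Definition ESpec fuel := forall x tx tr vis exp, Inv tr vis exp -> (x, tx) \in exp ->
  children tr tx = [::] -> size V < fuel + size vis ->
  Post tr tx (map fE (E x)) exp (explore E fuel x tx (tr, vis)).

Lemma Inv_size tr vis exp : Inv tr vis exp -> size vis <= size V.
Proof. case=> _ Hu Hs _ _ _ _. exact: uniq_leq_size. Qed.

Lemma fold_spec fuel' : ESpec fuel' -> forall x tx es tr vis exp, {subset es <= E x} ->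
  Inv tr vis exp -> (x, tx) \in exp -> size V < fuel'.+1 + size vis ->
  Post tr tx (children tr tx ++ map fE es) exp (foldl (dstep fuel' tx) (tr, vis) es).
Proof.
move=> IH x tx. elim=> [|e es IHes] tr vis exp Hsub HI Hx Hf.
  exists [::]. rewrite !cats0. split => //; by [exists [::]; rewrite cats0 | ].
case: e Hsub => [[c y] m] Hsub. have He : (c, y, m) \in E x by apply: Hsub; exact: mem_head.
have Hsub' : {subset es <= E x} by move=> z Hz; apply: Hsub; rewrite in_cons Hz orbT.
have Htx := Inv_tx HI Hx.
rewrite /= {1}/dstep. case Hy: (y \in vis).
- have HI1 := Inv_leaf HI Hx He Hy.
  have [exp' [HI' [t Ht] Hch Hnew Hfr]] := IHes _ _ _ Hsub' HI1 Hx Hf.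
  exists exp'. split => //.
  + exists (TEntry tx c (Some m) (Some y) :: t). by rewrite Ht -cats1 -catA.
  + by rewrite Hch children_rcons eqxx cat_rcons.
  + move=> y' v Hv. have [-> Hs] := Hnew _ _ Hv. split => //. move: Hs; rewrite size_rcons; lia.
  + move=> v Hv Hs. rewrite Hfr //; last by rewrite size_rcons; lia.
    by rewrite children_rcons /= eq_sym (negbTE Hv).
- have HI1 := Inv_new HI Hx He (negbT Hy).
  set tr1 := rcons tr _ in HI1 *. set w := (size tr).+1 in HI1 *.
  have Hx1 : (x, tx) \in rcons exp (y, w) by rewrite mem_rcons in_cons Hx orbT.
  have Hw1 : (y, w) \in rcons exp (y, w) by rewrite mem_rcons mem_head.
  have Hc1 : children tr1 w = [::] by apply: children_nil; [case: HI1 | rewrite /tr1 size_rcons].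
  have Hf1 : size V < fuel' + size (rcons vis y) by rewrite size_rcons; lia.
  have := IH y w tr1 _ _ HI1 Hw1 Hc1 Hf1.
  case: (explore E fuel' y w (tr1, rcons vis y)) => tr2 vis2.
  move=> [exp2 [HI2 [t2 Ht2] Hch2 Hnew2 Hfr2]]. simpl in *.
  have Hsz12 : size tr2 = size tr1 + size t2 by rewrite Ht2 size_cat.
  have Hsz1 : size tr1 = w by rewrite /tr1 size_rcons.
  have Hx2 : (x, tx) \in rcons exp (y, w) ++ exp2 by rewrite mem_cat Hx1.
  have Hf2 : size V < fuel'.+1 + size vis2.
    have Ea : size vis2 = (size exp).+1 + size exp2 by rewrite -(inv1 HI2) size_map size_cat size_rcons.
    have Eb : size vis = size exp by rewrite -(inv1 HI) size_map.
    lia.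
  have [exp3 [HI3 [t3 Ht3] Hch3 Hnew3 Hfr3]] := IHes _ _ _ Hsub' HI2 Hx2 Hf2.
  exists ((y, w) :: exp2 ++ exp3). split.
  + have -> : exp ++ (y, w) :: exp2 ++ exp3 = (rcons exp (y, w) ++ exp2) ++ exp3 by rewrite -cats1 -!catA.
    exact: HI3.
  + exists (TEntry tx c (Some m) (Some y) :: t2 ++ t3). by rewrite Ht3 Ht2 /tr1 -cats1 -!catA.
  + rewrite Hch3 Hfr2; first by rewrite /tr1 children_rcons eqxx cat_rcons.
    * apply/eqP; lia.
    * lia.
  + move=> y' v. rewrite in_cons mem_cat. case/orP => [/eqP [-> ->]|/orP [Hv|Hv]].
    * rewrite Hfr3; [split => //; lia | apply/eqP; lia | lia].
    * have [Hc Hs] := Hnew2 _ _ Hv.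
      have Hvs : v <= size tr2.
        have Hv' : (y', v) \in rcons exp (y, w) ++ exp2 by rewrite mem_cat Hv orbT.
        have [Hv0 [e [Ee _]]] := inv5 HI2 Hv'.
        have := onth_size Ee. lia.
      rewrite Hfr3 //; [split => //; lia | apply/eqP; lia].
    * have [Hc Hs] := Hnew3 _ _ Hv. split => //. lia.
  + move=> v Hv Hs. rewrite Hfr3 //; last lia. rewrite Hfr2; last lia; last by apply/eqP; lia.
    by rewrite /tr1 children_rcons /= eq_sym (negbTE Hv).
Qed.

Lemma explore_spec fuel : ESpec fuel.
Proof.
elim: fuel => [|fuel' IH] x tx tr vis exp HI Hx Hc Hf.
  have := Inv_size HI. lia.
rewrite explore_S. have := fold_spec IH (es := E x) (fun z Hz => Hz) HI Hx Hf.
by rewrite Hc.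
Qed.

End DFS.
Section Tree.
Variables A F : eqType.
Variable C : ctree A F.
Hypothesis Hpar : forall k e, onth C k = Some e -> tpar e <= k.

Definition par v := if v is v'.+1 then (if onth C v' is Some e then tpar e else 0) else 0.
Fixpoint anc v k := if k is k'.+1 then anc (par v) k' else v.
Fixpoint ups v k := if k is k'.+1 then rcons (ups (par v) k') v else [::].

Lemma par_le v : par v <= v.
Proof.
case: v => //= v. case E: (onth C v) => [e|] //. have := Hpar E. lia.
Qed.

Lemma anc_le v k : anc v k <= v.
Proof. elim: k v => //= k IH v. exact: leq_trans (IH _) (par_le v). Qed.

Lemma par_onth v e : onth C v.-1 = Some e -> 0 < v -> par v = tpar e.
Proof. case: v => // v H _. by rewrite /= H. Qed.

Lemma size_ups v k : size (ups v k) = k.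
Proof. elim: k v => //= k IH v. by rewrite size_rcons IH. Qed.

Lemma ups_cons v k : ups v k.+1 = anc v k :: ups v k.
Proof. elim: k v => //= k IH v. by rewrite IH. Qed.

Lemma ups_S v n : 0 < n -> ups v n = rcons (ups (par v) (n - 1)) v.
Proof. case: n => // n _. by rewrite subn1. Qed.

Lemma ups_cons' v n : 0 < n -> ups v n = anc v (n - 1) :: ups v (n - 1).
Proof. case: n => // n _. by rewrite subn1 ups_cons. Qed.


Lemma tchild_par u w : tchild C u w -> [/\ par w = u, 0 < w & exists e, onth C w.-1 = Some e].
Proof.
rewrite /tchild. case E: (onth C w.-1) => [e|] // /andP [Hw /eqP He].
case: w Hw E => // w _ E. split => //; last by exists e. by rewrite /= E.
Qed.

Lemma path_ups v0 vs : path (tchild C) v0 vs ->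
  vs = ups (last v0 vs) (size vs) /\ v0 = anc (last v0 vs) (size vs).
Proof.
elim/last_ind: vs => [|vs w IH] //=. rewrite rcons_path last_rcons size_rcons => /andP [Hp Ht].
have [Hpw _ _] := tchild_par Ht. have [E1 E2] := IH Hp.
by rewrite /= Hpw -E1 -E2.
Qed.

Definition valid v := 0 < v <= size C.

Lemma valid_onth v : valid v -> exists e, onth C v.-1 = Some e.
Proof.
move=> /andP [H1 H2]. case E: (onth C v.-1) => [e|]; first by exists e.
move: (onthNE C v.-1); rewrite E /=. lia.
Qed.

Lemma ups_path v k : (forall j, j < k -> valid (anc v j)) -> path (tchild C) (anc v k) (ups v k).
Proof.
elim: k v => //= k IH v Hv. rewrite rcons_path. apply/andP; split.
- apply: IH => j Hj. exact: (Hv j.+1).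
- have : last (anc (par v) k) (ups (par v) k) = par v by case: k {IH Hv} => //= k; rewrite last_rcons.
  move=> ->. have Hv0 := Hv 0 (ltn0Sn _). have [e Ee] := valid_onth Hv0.
  rewrite /tchild Ee. case/andP: Hv0 => H0 _. rewrite H0 /=.
  case: v H0 Ee {Hv} => // v _ /= ->. by [].
Qed.

Lemma tspell_rcons vs v e : onth C v.-1 = Some e ->
  tspell C (rcons vs v) = rcons (tspell C vs) (tlab e).
Proof. move=> H. by rewrite /tspell -!cats1 pmap_cat /= H. Qed.

Lemma tspell_cons vs v e : onth C v.-1 = Some e ->
  tspell C (v :: vs) = tlab e :: tspell C vs.
Proof. move=> H. by rewrite /tspell /= H. Qed.

End Tree.

Lemma filter_idx (A F : eqType) (C : ctree A F) (P : pred (tentry A F)) (g : tentry A F -> A) k k' e e' :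
  uniq (map g (filter P C)) -> onth C k = Some e -> onth C k' = Some e' ->
  P e -> P e' -> g e = g e' -> k = k'.
Proof.
elim: C k k' => [|a s IH] k k'; first by rewrite onth0n.
case: k => [|k]; case: k' => [|k'] //= Hu.
- move=> [<-] Hk' He He' Hg. exfalso. move: Hu. rewrite He /= => /andP [Hn _].
  move/negP: Hn; apply. rewrite Hg. apply: map_f. rewrite mem_filter He'. by apply/onthP; exists k'.
- move=> Hk [<-] He He' Hg. exfalso. move: Hu. rewrite He' /= => /andP [Hn _].
  move/negP: Hn; apply. rewrite -Hg. apply: map_f. rewrite mem_filter He. by apply/onthP; exists k.
- move=> Hk Hk' He He' Hg. congr S. apply: IH Hk Hk' He He' Hg.
  move: Hu. by case: (P a) => //= /andP [].
Qed.

Lemma onth_nthE (X : Type) (s : seq X) k x0 : k < size s -> onth s k = Some (nth x0 s k).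
Proof. elim: s k => [|a s IH] [|k] //= Hk. exact: IH. Qed.

Section Init.
Variables A F : eqType.
Variable q : nat.
Variable T : seq A.
Variable st : F.
Hypothesis HT : q - 1 <= size T.

Lemma size_init : size (init_tree q T st) = q - 1.
Proof. by rewrite /init_tree size_map size_zip size_iota size_takel // minnn. Qed.

Lemma init_onth k a0 : k < q - 1 -> onth (init_tree q T st) k =
  Some (TEntry k (nth a0 T k) None (if k.+1 == q - 1 then Some st else None)).
Proof.
move=> Hk. rewrite /init_tree onth_map (@onth_nthE _ _ k (0, a0)); last first.
  by rewrite size_zip size_iota size_takel // minnn.
rewrite nth_zip; last by rewrite size_iota size_takel.
by rewrite /= nth_iota // nth_take // add0n subn1.
Qed.
End Init.

Section Main.
Variables (A F : eqType) (q : nat) (S : slp A) (phi : seq A -> F) (ord : seq nat)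
  (ordr : F -> seq (A * F * nat)).
Hypothesis Hq : 2 <= q.
Hypothesis Hwf : slp_wf S.
Hypothesis Hocc : forall i, i < size S -> 0 < occ S i.
Hypothesis HqT : q <= size (slp_text S).
Hypothesis Hinj : forall u v, is_qgram (q - 1) (slp_text S) u -> is_qgram (q - 1) (slp_text S) v ->
     (phi u = phi v <-> u = v).
Hypothesis Hperm : perm_eq ord (iota 0 (size S)).
Hypothesis Hordr : forall x, perm_eq (ordr x) (out_edges (build_graph phi q S ord) x).
Local Notation T := (slp_text S).
Local Notation G := (build_graph phi q S ord).
Local Notation st := (phi (take (q - 1) T)).

Lemma out_mem x c y m : (c, y, m) \in ordr x ->
  exists e, [/\ e \in gedges G, esrc e = x, elab e = c, edst e = y & ecnt e = m].
Proof.
rewrite (perm_mem (Hordr x)) /out_edges => /mapP [e]. rewrite mem_filter => /andP [/eqP Hx He] [-> -> ->].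
by exists e.
Qed.

Lemma qg_pre k c : size k = q - 1 -> isub (rcons k c) T -> is_qgram (q - 1) T k.
Proof.
move=> Hs Hsub. apply/qgramP; split => //. apply: isub_trans Hsub.
exists [::], [:: c]. by rewrite cats1.
Qed.

Lemma qg_suf k c : size k = q - 1 -> isub (rcons k c) T -> is_qgram (q - 1) T (behead (rcons k c)).
Proof.
move=> Hs Hsub. apply/qgramP; split.
- rewrite size_behead size_rcons Hs. lia.
- apply: isub_trans Hsub. rewrite -drop1. exact: isub_drop.
Qed.

Lemma edge_str x c y m : (c, y, m) \in ordr x ->
  exists k, [/\ size k = q - 1, isub (rcons k c) T, x = phi k & y = phi (behead (rcons k c))].
Proof.
move=> H. have [e [He <- <- <- _]] := out_mem H.
have [_ [k [? ? ? ?]]] := (GI_build Hq phi Hwf Hocc ord).1 e He. by exists k.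
Qed.

Lemma EV x c y m : (c, y, m) \in ordr x -> y \in st :: gnodes G.
Proof.
move=> H. have [e [He _ _ <- _]] := out_mem H.
have [Hn _] := (GI_build Hq phi Hwf Hocc ord).1 e He. by rewrite in_cons Hn orbT.
Qed.

Lemma lab_inj x c y m y' m' : (c, y, m) \in ordr x -> (c, y', m') \in ordr x -> y = y' /\ m = m'.
Proof.
move=> H1 H2.
have [e [He Hx Hc Hy Hm]] := out_mem H1. have [e' [He' Hx' Hc' Hy' Hm']] := out_mem H2.
have [_ [k [Hk Hsk Hxk Hyk]]] := (GI_build Hq phi Hwf Hocc ord).1 e He.
have [_ [k' [Hk' Hsk' Hxk' Hyk']]] := (GI_build Hq phi Hwf Hocc ord).1 e' He'.
rewrite Hc in Hk Hsk Hyk. rewrite Hc' in Hk' Hsk' Hyk'.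
have Ekk : k = k'.
  apply/(Hinj (qg_pre Hk Hsk) (qg_pre Hk' Hsk')). by rewrite -Hxk -Hxk' Hx Hx'.
have Eyy : y = y' by rewrite -Hy -Hy' Hyk Hyk' Ekk.
split => //.
have Eee : e = e'.
  apply: (uniq_map_inj (GI_build Hq phi Hwf Hocc ord).2 He He').
  by rewrite /pairE Hx Hx' Hy Hy' Eyy.
by rewrite -Hm -Hm' Eee.
Qed.

Lemma uniq_ordr x : uniq (ordr x).
Proof.
rewrite (perm_uniq (Hordr x)) /out_edges map_inj_in_uniq.
- apply: filter_uniq. exact: map_uniq (GI_build Hq phi Hwf Hocc ord).2.
- move=> e e'. rewrite !mem_filter => /andP [/eqP Hx He] /andP [/eqP Hx' He'] [Hl Hd Hc].
  apply: (uniq_map_inj (GI_build Hq phi Hwf Hocc ord).2 He He').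
  by rewrite /pairE Hx Hx' Hd.
Qed.

Lemma uniq_lab x : uniq (map (fun t => t.1.1) (ordr x)).
Proof.
rewrite map_inj_in_uniq; first exact: uniq_ordr.
move=> [[c y] m] [[c' y'] m'] H1 H2 /= Ec. rewrite Ec in H1.
by have [-> ->] := lab_inj H1 H2; rewrite Ec.
Qed.


Local Notation V := (st :: gnodes G).
Local Notation init := (init_tree q T st).
Local Notation res := (explore ordr (size (gnodes G)).+1 st (q - 1) (init, [:: st])).
Local Notation Cf := res.1.

Lemma a0_ex : exists a0 : A, True.
Proof. move: HqT. case: T => [|a ?] /=; [lia|by exists a]. Qed.

Lemma dfs_result : exists X, [/\ Inv ordr V (q - 1) Cf res.2 X, (st, q - 1) \in X,
  exists t, Cf = init ++ t &
  forall y v, (y, v) \in X -> children Cf v = map (@fE _ _) (ordr y)].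
Proof.
have [a0 _] := a0_ex.
have HT1 : q - 1 <= size T by lia.
have Hinit6 : forall k e, onth init k = Some e -> tpar e <= k.
  move=> k e Hk. have Hk' := onth_size Hk. rewrite size_init // in Hk'.
  rewrite (init_onth _ HT1 a0 Hk') // in Hk. by case: Hk => <-.
have HI0 : Inv ordr V (q - 1) init [:: st] [:: (st, q - 1)].
  split => //.
  - by move=> z; rewrite inE => /eqP ->; exact: mem_head.
  - by rewrite size_init.
  - move=> y v. rewrite inE => /eqP [-> ->]. split; first lia.
    exists (TEntry (q - 1).-1 (nth a0 T (q - 1).-1) None (Some st)).
    rewrite (init_onth _ HT1 a0) //; last lia. by have -> : (q - 1).-1.+1 == q - 1 by apply/eqP; lia.
  - move=> k e Hk Hb. have := onth_size Hk. rewrite size_init //. lia.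
have Hc0 : children init (q - 1) = [::] by apply: children_nil => //; rewrite size_init.
have Hf0 : size V < (size (gnodes G)).+1 + size [:: st] by rewrite /= addn1.
have [exp' [HI [t Ht] Hch Hnew _]] := explore_spec (@EV) HI0 (mem_head _ _) Hc0 Hf0.
exists ((st, q - 1) :: exp'). split => //; first exact: mem_head; first by exists t.
move=> y v. rewrite in_cons => /orP [/eqP [-> ->]|Hv]; first exact: Hch.
exact: (Hnew _ _ Hv).1.
Qed.

Lemma eq_take_behead (u w : seq A) : size u = q -> size w = q ->
  take (q - 1) u = take (q - 1) w -> behead u = behead w -> u = w.
Proof.
case: u => [|a u]; case: w => [|b w] //=; try lia.
move=> _ _ Ht ->. have E : q - 1 = (q - 2).+1 by lia. rewrite E /= in Ht. by case: Ht => ->.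
Qed.

Lemma fst_uniq (X : seq (F * nat)) x p p' : uniq (map fst X) -> (x, p) \in X -> (x, p') \in X -> p = p'.
Proof. move=> Hu H1 H2. by have [] := uniq_map_inj Hu H1 H2 erefl. Qed.

Section WithX.
Variable X : seq (F * nat).
Variable CC : ctree A F.
Variable visf : seq F.
Hypothesis HIX : Inv ordr V (q - 1) CC visf X.
Hypothesis HstX : (st, q - 1) \in X.
Hypothesis Hpre : exists t, CC = init ++ t.
Hypothesis Hfull : forall y v, (y, v) \in X -> children CC v = map (@fE _ _) (ordr y).

Lemma HT1 : q - 1 <= size T. Proof. lia. Qed.

Lemma Cinit k : k < q - 1 -> onth CC k = onth init k.
Proof. move=> Hk. case: Hpre => t ->. by rewrite onth_cat size_init ?Hk // HT1. Qed.

Lemma Cpar k e : onth CC k = Some e -> tpar e <= k.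
Proof. by case: HIX => _ _ _ _ _ H6 _; apply: H6. Qed.

Lemma init_anc j i : j <= q - 1 -> anc CC j i = j - i.
Proof.
have [a0 _] := a0_ex.
elim: i j => [|i IH] j Hj /=; first by rewrite subn0.
case: j Hj => [|j] Hj /=; first by rewrite IH.
rewrite Cinit; last lia. rewrite (init_onth _ HT1 a0); last lia. rewrite /= IH; lia.
Qed.

Lemma init_spell j : j <= q - 1 -> tspell CC (ups CC j j) = take j T.
Proof.
have [a0 _] := a0_ex.
elim: j => [|j IH] Hj /=; first by rewrite take0.
have Hon : onth CC j = Some (TEntry j (nth a0 T j) None (if j.+1 == q - 1 then Some st else None)).
  rewrite Cinit; last lia. rewrite (init_onth _ HT1 a0) ?HT1 //; lia.
rewrite Hon (@tspell_rcons _ _ _ _ j.+1 _ Hon) IH; last lia. rewrite (take_nth a0) //. have := HT1; lia.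
Qed.

Lemma SI v : forall e y, onth CC v.-1 = Some e -> 0 < v -> tfp e = Some y ->
  (forall j, j < q - 1 -> valid CC (anc CC v j)) /\
  exists k, [/\ is_qgram (q - 1) T k, phi k = y & tspell CC (ups CC v (q - 1)) = k].
Proof.
have [a0 _] := a0_ex.
elim/ltn_ind: v => v IH e y Hv Hv0 Hy.
have Hvs : v <= size CC by have := onth_size Hv; lia.
case: (ltnP v.-1 (q - 1)) => Hvq.
- rewrite Cinit // (init_onth _ HT1 a0) ?HT1 // in Hv. case: Hv => Ee. rewrite -Ee /= in Hy.
  have Hvq1 : v = q - 1 by move: Hy; case: eqP => //; lia.
  split.
  + move=> j Hj. rewrite /valid init_anc; last lia. apply/andP; split; lia.
  + exists (take (q - 1) T). split.
    * apply/qgramP; split; [by rewrite size_takel // HT1 | exact: isub_take].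
    * move: Hy. have -> : v.-1.+1 == q - 1 by apply/eqP; lia. by case.
    * by rewrite Hvq1 init_spell.
- have [x [y' [m [Hx He Hc Hf Hyv]]]] := inv7 HIX Hv Hvq.
  rewrite Hf in Hy. case: Hy => Ey. subst y'.
  set p := tpar e in Hx He.
  have [Hp0 [e' [He' Hfe']]] := inv5 HIX Hx.
  have Hpv : p < v by have := Cpar Hv; rewrite /p; lia.
  have [IHv [k0 [Hk0 Hphik0 Hsp]]] := IH p Hpv e' x He' Hp0 Hfe'.
  have Hparv : par CC v = p by rewrite (par_onth Hv Hv0).
  have [k [Hk Hsub Hxk Hyk]] := edge_str He.
  have Ekk : k0 = k by apply/(Hinj Hk0 (qg_pre Hk Hsub)); rewrite Hphik0.
  split.
  + case=> [|j] Hj /=; first by rewrite /valid Hv0 Hvs.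
    rewrite Hparv. apply: IHv. lia.
  + exists (behead (rcons k (tlab e))). split => //; first exact: qg_suf.
    have -> : ups CC v (q - 1) = ups CC v (q - 2).+1 by congr ups; lia.
    rewrite /= Hparv (tspell_rcons _ Hv).
    have Hsp' : tspell CC (ups CC p (q - 2).+1) = k by rewrite -Ekk -Hsp; congr tspell; congr ups; lia.
    have [e'' He''] : exists e'', onth CC (anc CC p (q - 2)).-1 = Some e''.
      apply: valid_onth. apply: IHv. lia.
    rewrite ups_cons (tspell_cons _ He'') in Hsp'.
    case: k Hk {Hsub Hxk Hyk Ekk} Hsp' => [|a k] /= Hk; first lia.
    by case => _ ->.
Qed.
Lemma child_entry x p c y m : (x, p) \in X -> (c, y, m) \in ordr x ->
  exists k e, [/\ onth CC k = Some e, q - 1 <= k, tpar e = p, tlab e = c & tfp e = Some y].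
Proof.
have [a0 _] := a0_ex.
move=> Hx Hc. have : fE (c, y, m) \in children CC p by rewrite (Hfull Hx); exact: map_f.
rewrite /children => /mapP [e]. rewrite mem_filter => /andP [/eqP Hp /onthP [k Hk]].
rewrite /hE /fE /= => [[Hl Hcnt Hfp]].
exists k, e. split => //.
case: (leqP (q - 1) k) => // Hkq. exfalso.
move: Hk. rewrite Cinit // (init_onth _ HT1 a0) // => [[Ee]]. by rewrite -Ee in Hcnt.
Qed.

Lemma in_X_of_vis y : y \in visf -> exists p, (y, p) \in X.
Proof.
case: HIX => <- _ _ _ _ _ _ => /mapP [[y' p] H /= ->]. by exists p.
Qed.

Lemma edge_from x y : hasE G x y -> exists c m, (c, y, m) \in ordr x.
Proof.
move=> /hasP [e He /andP [/eqP Hx /eqP Hy]]. exists (elab e), (ecnt e).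
rewrite (perm_mem (Hordr x)) /out_edges. rewrite -Hy. apply/mapP. exists e => //.
by rewrite mem_filter Hx eqxx.
Qed.

Lemma take_win_pre i : take (q - 1) (take q (drop i T)) = take (q - 1) (drop i T).
Proof. rewrite take_takel //; lia. Qed.

Lemma take_win_suf i : behead (take q (drop i T)) = take (q - 1) (drop i.+1 T).
Proof.
have -> : take q (drop i T) = take (q - 1).+1 (drop i T) by congr take; lia.
by rewrite behead_take behead_drop.
Qed.

Lemma reach i : i + (q - 1) <= size T -> exists p, (phi (take (q - 1) (drop i T)), p) \in X.
Proof.
elim: i => [|i IH] Hi; first by exists (q - 1); rewrite drop0.
have [p Hp] := IH (ltnW Hi).
have Hs : is_qgram q T (take q (drop i T)) by exists i; split => //; lia.
have := hasE_build Hq phi Hwf Hperm Hs. rewrite take_win_pre take_win_suf.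
move=> /edge_from [c [m Hc]].
have [k [e [Hk Hkq Hpar Hlab Hfp]]] := child_entry Hp Hc.
have [x' [y' [m' [_ _ _ Hfp' Hy']]]] := inv7 HIX Hk Hkq.
rewrite Hfp in Hfp'. case: Hfp' => <- in Hy'.
exact: in_X_of_vis.
Qed.
Lemma main_unique s : is_qgram q T s ->
  exists! P : nat * seq nat, down_path CC P.1 P.2 /\ size P.2 = q /\ tspell CC P.2 = s.
Proof.
have [a0 _] := a0_ex.
move=> Hs. have [Hsz Hsub] := (qgramP _ _ _).1 Hs. case: (Hs) => [i [Hi Es]].
have [p Hp] : exists p, (phi (take (q - 1) s), p) \in X.
  have := @reach i; rewrite Es take_win_pre. apply. lia.
have := hasE_build Hq phi Hwf Hperm Hs => /edge_from [c [m Hc]].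
have [k [e [Hk Hkq Hpe Hle Hfe]]] := child_entry Hp Hc.
have [kk [Hkk Hsubk Hxk Hyk]] := edge_str Hc.
have Htq : is_qgram (q - 1) T (take (q - 1) s).
  apply/qgramP; split; [rewrite size_takel ?Hsz //; lia | exact: isub_trans (isub_take _ _) Hsub].
have Hbq : is_qgram (q - 1) T (behead s).
  apply/qgramP; split; [rewrite size_behead Hsz; lia | apply: isub_trans Hsub; rewrite -drop1; exact: isub_drop].
have Ekk : kk = take (q - 1) s by apply/(Hinj (qg_pre Hkk Hsubk) Htq); rewrite -Hxk.
have Ebh : behead (rcons kk c) = behead s by apply/(Hinj (qg_suf Hkk Hsubk) Hbq); rewrite -Hyk.
have Es2 : rcons kk c = s.
  apply: eq_take_behead => //; first by rewrite size_rcons Hkk; lia.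
  by rewrite -cats1 take_size_cat.
have [Hp0 [e' [He' Hfe']]] := inv5 HIX Hp.
have [Hval [k0 [Hk0 Hphik0 Hsp]]] := SI He' Hp0 Hfe'.
have Ek0 : k0 = kk by apply/(Hinj Hk0 (qg_pre Hkk Hsubk)); rewrite Hphik0.
have Hw : onth CC k.+1.-1 = Some e by [].
have Hparw : par CC k.+1 = p by rewrite (par_onth Hw) // Hpe.
have Hwv : valid CC k.+1 by rewrite /valid /=; have := onth_size Hk; lia.
have Hvalw : forall j, j < q -> valid CC (anc CC k.+1 j).
  case=> [|j] Hj //. change (valid CC (anc CC (par CC k.+1) j)). rewrite Hparw. apply: Hval. lia.
have Hspw : tspell CC (ups CC k.+1 q) = s.
  rewrite ups_S; last lia. rewrite Hparw (tspell_rcons _ Hw) Hsp Ek0 Hle. exact: Es2.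
have Hlabu : uniq (map (@tlab _ _) (filter (fun e0 => tpar e0 == p) CC)).
  have E1 : map (@tlab _ _) (filter (fun e0 => tpar e0 == p) CC) =
            map (fun t => t.1.1) (children CC p) by rewrite /children -map_comp.
  rewrite E1 (Hfull Hp) -map_comp.
  rewrite (@eq_map _ _ _ (fun t : A * F * nat => t.1.1)); first exact: uniq_lab.
  by case=> [[]].
exists (anc CC k.+1 q, ups CC k.+1 q). split.
- split; last by rewrite size_ups.
  split; last exact: ups_path.
  apply: leq_trans (anc_le Cpar _ _) _. by case/andP: Hwv.
move=> [v0 vs] /= [[Hv0 Hpath] [Hsz2 Hsp2]].
have [Evs Ev0] := path_ups Hpath. rewrite Hsz2 in Evs Ev0.
move: (last v0 vs) Evs Ev0 => u Evs Ev0.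
rewrite Evs in Hpath Hsp2.
have Hanc : 0 < anc CC u (q - 1).
  move: (Hpath). rewrite (@ups_cons' _ _ CC u q (ltnW Hq)) /= => /andP [Ht1 _].
  by have [_ ? _] := tchild_par Ht1.
move: Hpath; rewrite (@ups_S _ _ CC u q (ltnW Hq)) rcons_path => /andP [Hpath1 Htc].
rewrite (@ups_S _ _ CC u q (ltnW Hq)) in Hsp2.
have [_ Hu0 [eu Hu]] := tchild_par Htc.
have Huq : q - 1 <= u.-1.
  case: (leqP (q - 1) u.-1) => // Hlt. rewrite init_anc in Hanc; lia.
have [x' [y' [m' [Hx' Hc' _ _ _]]]] := inv7 HIX Hu Huq.
have Hpu := par_onth Hu Hu0.
have [Hpu0 [eu' [Heu' Hfeu']]] := inv5 HIX Hx'.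
have [_ [k0' [Hk0' Hphi' Hsp']]] := SI Heu' Hpu0 Hfeu'.
rewrite (tspell_rcons _ Hu) Hpu Hsp' in Hsp2.
have Hk0s : size k0' = q - 1 by have [] := (qgramP _ _ _).1 Hk0'.
have Ex' : x' = phi (take (q - 1) s) by rewrite -Hsp2 -cats1 take_size_cat.
have Elab : tlab eu = c.
  have := congr1 (last a0) Hsp2. rewrite last_rcons => ->. by rewrite -Es2 last_rcons.
rewrite Ex' in Hx'.
have Epp : tpar eu = p.
  case: HIX => H1 H2 _ _ _ _ _. rewrite -H1 in H2. exact: fst_uniq H2 Hx' Hp.
have Eku : k = u.-1.
  apply: (filter_idx (P := fun e0 => tpar e0 == p) (g := @tlab _ _) Hlabu Hk Hu);
    by rewrite ?Hpe ?Epp ?eqxx // Hle Elab.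
have Eu : u = k.+1 by lia.
by rewrite Ev0 Evs Eu.
Qed.
End WithX.
End Main.

Theorem lemma8 (A F : eqType) (q : nat) (S : slp A) (phi : seq A -> F)
    (ord : seq nat) (ordr : F -> seq (A * F * nat)) :
  2 <= q ->
  slp_wf S ->
  (forall i, i < size S -> 0 < occ S i) ->
  q <= size (slp_text S) ->
  (forall u v, is_qgram (q - 1) (slp_text S) u -> is_qgram (q - 1) (slp_text S) v ->
     (phi u = phi v <-> u = v)) ->
  perm_eq ord (iota 0 (size S)) ->
  (forall x, perm_eq (ordr x) (out_edges (build_graph phi q S ord) x)) ->
  forall s, is_qgram q (slp_text S) s ->
    let C := cs_tree phi q (slp_text S) (build_graph phi q S ord) ordr in
    exists! p : nat * seq nat,
      down_path C p.1 p.2 /\ size p.2 = q /\ tspell C p.2 = s.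
Proof.
move=> Hq Hwf Hocc HqT Hinj Hperm Hordr s Hs.
rewrite /cs_tree.
have [X [HI HstX Hpre Hfull]] := dfs_result Hq Hwf Hocc HqT Hperm Hordr.
exact: (main_unique Hq Hwf Hocc HqT Hinj Hperm Hordr HI HstX Hpre Hfull Hs).
Qed.
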